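(* Let $K$ be a ramified quadratic extension of $\mathbb{Q}_2$, $d=2m$ with $m$ odd, $m\ge3$, and $f=a_1x_1^d+\dots+a_sx_s^d$ with all $a_i\in\mathcal{O}\setminus\{0\}$. Suppose that for some level $k$, $f$ has two variables at level $k$ with the same $\pi$-coefficient, and either $f$ has a variable at level $k+2$ and a variable at level $k+3$, or $f$ has a variable at level $k+3$ and a variable at level $k+4$. Then $f$ has a nontrivial zero in $K$.
   Context: $\mathcal{O}$ is the ring of integers of $K$ and $\pi$ the uniformizer: $\pi=\sqrt{2},\sqrt{-2},\sqrt{10},\sqrt{-10},1+\sqrt{-1},1+\sqrt{-5}$ for $K=\mathbb{Q}_2(\sqrt2),\mathbb{Q}_2(\sqrt{-2}),\mathbb{Q}_2(\sqrt{10}),\mathbb{Q}_2(\sqrt{-10}),\mathbb{Q}_2(\sqrt{-1}),\mathbb{Q}_2(\sqrt{-5})$ respectively. Each unit $u$ has a unique expansion $u=c_0+c_1\pi+c_2\pi^2+\cdots$ with $c_j\in\{0,1\}$, $c_0=1$. Writing $a_i=\pi^r u$ with $u$ a unit, the variable $x_i$ is at level $r\bmod d$ (levels are residues modulo $d$), and its $\pi$-coefficient is $c_1$ of $u$. A nontrivial zero is a point of $K^s$, not all coordinates zero, where $f$ vanishes. *)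

(* Defs.v *)
(* Concrete model of the six ramified quadratic extensions
   K = Q_2(sqrt c) of Q_2, c in {2,-2,10,-10,-1,-5}.
   - Z_2 is the inverse limit of Z/2^n Z: a 2-adic integer is a coherent
     sequence of integers (x_n) with x_{n+1} = x_n mod 2^n, two such being
     equal iff x_n = y_n mod 2^n for all n (setoid equality).
   - O = Z_2[sqrt c] (this is the ring of integers in all six cases), an element
     being a pair of 2-adic integers (re, im) standing for re + im*sqrt c.
   - K = O[1/pi]: an element is a pair (u, k) standing for u / pi^k. *)
From mathcomp Require Import all_boot all_algebra.
Set Implicit Arguments. Unset Strict Implicit. Unset Printing Implicit Defensive.
Import GRing.Theory Num.Theory.
Local Open Scope ring_scope.

Inductive ramext := Q2sqrt2 | Q2sqrtm2 | Q2sqrt10 | Q2sqrtm10 | Q2sqrtm1 | Q2sqrtm5.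

Definition rad (K : ramext) : int :=
  match K with
  | Q2sqrt2 => 2 | Q2sqrtm2 => -2 | Q2sqrt10 => 10 | Q2sqrtm10 => -10
  | Q2sqrtm1 => -1 | Q2sqrtm5 => -5 end.

Definition congz (n : nat) (x y : int) : Prop := (x - y) \in dvdz ((2 : int) ^+ n).

Definition OK := ((nat -> int) * (nat -> int))%type.

Definition coherent (u : OK) : Prop :=
  forall n, congz n (u.1 n.+1) (u.1 n) /\ congz n (u.2 n.+1) (u.2 n).

Definition eqO (u v : OK) : Prop :=
  forall n, congz n (u.1 n) (v.1 n) /\ congz n (u.2 n) (v.2 n).

Definition constO (a b : int) : OK := (fun _ => a, fun _ => b).
Definition zeroO : OK := constO 0 0.
Definition oneO : OK := constO 1 0.
Definition addO (u v : OK) : OK := (fun n => u.1 n + v.1 n, fun n => u.2 n + v.2 n).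
Definition mulO (K : ramext) (u v : OK) : OK :=
  (fun n => u.1 n * v.1 n + rad K * (u.2 n * v.2 n),
   fun n => u.1 n * v.2 n + u.2 n * v.1 n).
Definition expO (K : ramext) (u : OK) (k : nat) : OK := iter k (mulO K u) oneO.

Definition piO (K : ramext) : OK :=
  match K with
  | Q2sqrtm1 | Q2sqrtm5 => constO 1 1
  | _ => constO 0 1
  end.

Definition unitO (K : ramext) (u : OK) : Prop :=
  exists w, coherent w /\ eqO (mulO K u w) oneO.

Definition picoef (K : ramext) (u : OK) (b : bool) : Prop :=
  exists w, coherent w /\
    eqO u (addO (addO oneO (if b then piO K else zeroO))
                (mulO K (expO K (piO K) 2) w)).

Definition at_level (K : ramext) (d : nat) (a : OK) (k : nat) : Prop :=
  exists (r : nat) (u : OK), coherent u /\ unitO K u /\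
    eqO a (mulO K (expO K (piO K) r) u) /\ (r %% d = k %% d)%N.

Definition at_level_coef (K : ramext) (d : nat) (a : OK) (k : nat) (b : bool) : Prop :=
  exists (r : nat) (u : OK), coherent u /\ unitO K u /\
    eqO a (mulO K (expO K (piO K) r) u) /\ (r %% d = k %% d)%N /\ picoef K u b.

Definition FK := (OK * nat)%type.
Definition eqK (K : ramext) (x y : FK) : Prop :=
  eqO (mulO K x.1 (expO K (piO K) y.2)) (mulO K y.1 (expO K (piO K) x.2)).
Definition zeroK : FK := (zeroO, 0%N).
Definition oneK : FK := (oneO, 0%N).
Definition addK (K : ramext) (x y : FK) : FK :=
  (addO (mulO K x.1 (expO K (piO K) y.2)) (mulO K y.1 (expO K (piO K) x.2)),
   (x.2 + y.2)%N).
Definition mulK (K : ramext) (x y : FK) : FK := (mulO K x.1 y.1, (x.2 + y.2)%N).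
Definition expK (K : ramext) (x : FK) (k : nat) : FK := iter k (mulK K x) oneK.

Definition form_value (K : ramext) (d s : nat) (a : 'I_s -> OK) (x : 'I_s -> FK) : FK :=
  \big[addK K/zeroK]_(i < s) mulK K (a i, 0%N) (expK K (x i) d).

Definition has_nontrivial_zero (K : ramext) (d s : nat) (a : 'I_s -> OK) : Prop :=
  exists x : 'I_s -> FK,
    (forall i, coherent (x i).1) /\
    (exists i, ~ eqK K (x i) zeroK) /\
    eqK K (form_value K d a x) zeroK.

(* Main.v *)
Require Import Defs.
From mathcomp Require Import all_boot all_algebra.
From HB Require Import structures.
From mathcomp Require Import ring lra zify.
Set Warnings "-notation-overridden,-ambiguous-paths,-redundant-canonical-projection".
Set Implicit Arguments. Unset Strict Implicit. Unset Printing Implicit Defensive.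
Import GRing.Theory Num.Theory.
Local Open Scope ring_scope.

Record zc (c : int) := ZC { re : int; im : int }.
Arguments ZC {c}.
Section ZCdef.
Variable c : int.
Definition zc2p (x : zc c) := (re x, im x).
Definition p2zc (p : int * int) : zc c := ZC p.1 p.2.
Lemma zcK : cancel zc2p p2zc. Proof. by case. Qed.
HB.instance Definition _ := Choice.copy (zc c) (can_type zcK).
Definition zadd (x y : zc c) : zc c := ZC (re x + re y) (im x + im y).
Definition zopp (x : zc c) : zc c := ZC (- re x) (- im x).
Definition z0 : zc c := ZC 0 0.
Definition z1 : zc c := ZC 1 0.
Definition zmul (x y : zc c) : zc c :=
  ZC (re x * re y + c * (im x * im y)) (re x * im y + im x * re y).
Lemma zaddA : associative zadd. Proof. by move=> [a b] [a' b'] [a'' b'']; rewrite /zadd /= !addrA. Qed.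
Lemma zaddC : commutative zadd. Proof. by move=> [a b] [a' b']; rewrite /zadd /= addrC (addrC b). Qed.
Lemma zadd0 : left_id z0 zadd. Proof. by move=> [a b]; rewrite /zadd /= !add0r. Qed.
Lemma zaddN : left_inverse z0 zopp zadd. Proof. by move=> [a b]; rewrite /zadd /= !addNr. Qed.
HB.instance Definition _ := GRing.isZmodule.Build (zc c) zaddA zaddC zadd0 zaddN.
Lemma zmulA : associative zmul.
Proof. move=> [a b] [a' b'] [a'' b'']; rewrite /zmul /=; congr ZC; ring. Qed.
Lemma zmulC : commutative zmul.
Proof. move=> [a b] [a' b']; rewrite /zmul /=; congr ZC; ring. Qed.
Lemma zmul1 : left_id z1 zmul.
Proof. move=> [a b]; rewrite /zmul /=; congr ZC; ring. Qed.
Lemma zmulD : left_distributive zmul zadd.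
Proof. move=> [a b] [a' b'] [a'' b'']; rewrite /zmul /zadd /=; congr ZC; ring. Qed.
Lemma z1_neq0 : z1 != z0. Proof. by []. Qed.
HB.instance Definition _ := GRing.Zmodule_isComNzRing.Build (zc c) zmulA zmulC zmul1 zmulD z1_neq0.
End ZCdef.

Section Cg.
Variable c : int.
Local Notation R := (zc c).
Lemma zc_eq (x y : R) : re x = re y -> im x = im y -> x = y.
Proof. by case: x => a b; case: y => a' b' /= -> ->. Qed.
Lemma reD (x y : R) : re (x + y) = re x + re y. Proof. by []. Qed.
Lemma imD (x y : R) : im (x + y) = im x + im y. Proof. by []. Qed.
Lemma reN (x : R) : re (- x) = - re x. Proof. by []. Qed.
Lemma imN (x : R) : im (- x) = - im x. Proof. by []. Qed.
Lemma reM (x y : R) : re (x * y) = re x * re y + c * (im x * im y). Proof. by []. Qed.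
Lemma imM (x y : R) : im (x * y) = re x * im y + im x * re y. Proof. by []. Qed.
Lemma re1 : re (1 : R) = 1. Proof. by []. Qed.
Lemma im1 : im (1 : R) = 0. Proof. by []. Qed.
Lemma re0 : re (0 : R) = 0. Proof. by []. Qed.
Lemma im0 : im (0 : R) = 0. Proof. by []. Qed.
Lemma reB (x y : R) : re (x - y) = re x - re y. Proof. by []. Qed.
Lemma imB (x y : R) : im (x - y) = im x - im y. Proof. by []. Qed.
Lemma two_exp k : (2 : R) ^+ k = ZC (2 ^+ k) 0.
Proof.
elim: k => [|k IH]; first by [].
rewrite exprS IH; apply: zc_eq; rewrite ?reM ?imM [in RHS]exprS /=; ring.
Qed.

Definition cg (k : nat) (x y : R) := exists z : R, x - y = 2 ^+ k * z.
Lemma cg_refl k x : cg k x x. Proof. by exists 0; rewrite subrr mulr0. Qed.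
Lemma cg_sym k x y : cg k x y -> cg k y x.
Proof. by case=> z H; exists (- z); rewrite -opprB H mulrN. Qed.
Lemma cg_trans k x y w : cg k x y -> cg k y w -> cg k x w.
Proof.
case=> z1 H1 [z2 H2]; exists (z1 + z2).
by rewrite mulrDr -H1 -H2 addrA subrK.
Qed.
Lemma cgD k x y x' y' : cg k x y -> cg k x' y' -> cg k (x + x') (y + y').
Proof.
case=> z1 H1 [z2 H2]; exists (z1 + z2).
rewrite mulrDr -H1 -H2; ring.
Qed.
Lemma cgN k x y : cg k x y -> cg k (- x) (- y).
Proof. case=> z H; exists (- z); rewrite mulrN -H; ring. Qed.
Lemma cgB k x y x' y' : cg k x y -> cg k x' y' -> cg k (x - x') (y - y').
Proof. by move=> H1 H2; apply: cgD => //; apply: cgN. Qed.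
Lemma cgM k x y x' y' : cg k x y -> cg k x' y' -> cg k (x * x') (y * y').
Proof.
case=> z1 H1 [z2 H2]; exists (x * z2 + z1 * y').
have -> : x * x' - y * y' = x * (x' - y') + (x - y) * y' by ring.
rewrite H1 H2; ring.
Qed.
Lemma cgX k x y n : cg k x y -> cg k (x ^+ n) (y ^+ n).
Proof.
move=> H; elim: n => [|n IH]; first exact: cg_refl.
by rewrite !exprS; apply: cgM.
Qed.
Lemma cg_le k k' x y : (k' <= k)%N -> cg k x y -> cg k' x y.
Proof.
move=> le [z H]; exists (2 ^+ (k - k') * z).
by rewrite H mulrA -exprD subnKC.
Qed.
Lemma cg0 x y : cg 0 x y.
Proof. by exists (x - y); rewrite expr0 mul1r. Qed.
Lemma cg_mul k x : cg k (2 ^+ k * x) 0.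
Proof. by exists x; rewrite subr0. Qed.
Lemma cgE k x y : cg k x y <-> cg k (x - y) 0.
Proof. by split; case=> z H; exists z; rewrite ?subr0 // -H subr0. Qed.
Lemma cgMl k x y a : cg k x y -> cg k (a * x) (a * y).
Proof. by apply: cgM; apply: cg_refl. Qed.
Lemma cgMr k x y a : cg k x y -> cg k (x * a) (y * a).
Proof. by move=> H; apply: cgM => //; apply: cg_refl. Qed.

Lemma cg_int k x y : cg k x y <->
  ((2 ^+ k %| re x - re y)%Z /\ (2 ^+ k %| im x - im y)%Z).
Proof.
split.
  case=> z H; have := congr1 (@re c) H; have := congr1 (@im c) H.
  rewrite two_exp reB imB reM imM /= => -> ->.
  by split; apply/dvdzP; [exists (re z) | exists (im z)]; ring.
case=> /dvdzP [a Ha] /dvdzP [b Hb]; exists (ZC a b).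
apply: zc_eq; rewrite two_exp ?reB ?imB ?reM ?imM /= ?Ha ?Hb; ring.
Qed.

Definition Nm (x : R) : int := re x ^+ 2 - c * im x ^+ 2.
Lemma NmM x y : Nm (x * y) = Nm x * Nm y.
Proof. rewrite /Nm reM imM; ring. Qed.
Lemma NmX x n : Nm (x ^+ n) = Nm x ^+ n.
Proof.
elim: n => [|n IH]; first by rewrite /Nm /=; ring.
by rewrite !exprS NmM IH.
Qed.
Lemma Nm_cg k x y : cg k x y -> (2 ^+ k %| Nm x - Nm y)%Z.
Proof.
case/cg_int=> H1 H2.
have -> : Nm x - Nm y = (re x - re y) * (re x + re y) - c * ((im x - im y) * (im x + im y)).
  rewrite /Nm; ring.
by apply: rpredB; [apply: dvdz_mulr | apply: dvdz_mull; apply: dvdz_mulr].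
Qed.
End Cg.

Section Hensel.
Variable c : int.
Local Notation R := (zc c).

Definition divc (x : R) (N : int) : R := ZC (re x %/ N)%Z (im x %/ N)%Z.
Lemma divcK k (x : R) : cg k x 0 -> x = 2 ^+ k * divc x (2 ^+ k).
Proof.
case/cg_int; rewrite re0 im0 !subr0 => H1 H2.
apply: zc_eq; rewrite two_exp ?reM ?imM /=; [rewrite -[LHS](divzK H1) | rewrite -[LHS](divzK H2)]; ring.
Qed.

Lemma binom (d : R) n : exists Q : R, (1 + d) ^+ n = 1 + n%:R * d + d ^+ 2 * Q.
Proof.
elim: n => [|n [Q IH]]; first by exists 0; rewrite expr0 mulr0n mul0r mulr0 !addr0.
exists (n%:R + Q + d * Q); rewrite exprS IH mulrS; ring.
Qed.

Variables (m : nat) (T : nat -> R) (s0 : R).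
Hypothesis Hm : odd m.
Hypothesis HT : forall n, cg n (T n.+1) (T n).
Hypothesis H1 : forall n, cg 1 (T n.+1) 1.
Hypothesis H0 : cg 3 (s0 ^+ (2 * m)) (T 3).

Lemma Tchain n j : cg n (T (j + n)) (T n).
Proof.
elim: j => [|j IH]; first exact: cg_refl.
apply: cg_trans IH; apply: (@cg_le _ (j + n)); first exact: leq_addl.
by rewrite addSn; apply: HT.
Qed.

Fixpoint S j : R := match j with
  | 0 => s0
  | j'.+1 => let s := S j' in
     s - 2 ^+ j'.+2 * divc (s ^+ (2 * m) - T j'.+4) (2 ^+ j'.+3) * s
  end.

Lemma Sinv j : cg j.+3 (S j ^+ (2 * m)) (T j.+3).
Proof.
elim: j => [|j IH]; first exact: H0.
rewrite [S j.+1]/=.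
set s := S j; set A := s ^+ (2 * m); set e := divc (A - T j.+4) (2 ^+ j.+3).
have HX : A - T j.+4 = 2 ^+ j.+3 * e.
  apply: divcK; apply: (proj1 (cgE _ _ _)); apply: cg_trans IH _; apply: cg_sym; exact: HT.
have [w Hw] : cg 1 (1 - m%:R * A) 0.
  have HA : cg 1 A 1.
    apply: cg_trans (H1 j.+2); apply: (@cg_le _ j.+3) => //.
  have Hq : m = (1 + 2 * m./2)%N by rewrite -{1}(odd_double_half m) Hm -muln2 mulnC.
  have -> : 1 - m%:R * A = (1 - A) - 2 * ((m./2)%:R * A).
    by rewrite {1}Hq natrD natrM; ring.
  have h1 : cg 1 (1 - A) 0 by apply: (proj1 (cgE _ _ _)); apply: cg_sym.
  have := cgB h1 (cg_mul 1 ((m./2)%:R * A)).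
  by rewrite subr0 expr1.
have [Q HQ] := binom (- (2 ^+ j.+2 * e)) (2 * m).
exists (e * w + A * 2 ^+ j * e ^+ 2 * Q).
have -> : s - 2 ^+ j.+2 * e * s = s * (1 + - (2 ^+ j.+2 * e)) by ring.
rewrite exprMn -/A HQ.
rewrite subr0 in Hw.
have E1 : A - T j.+4 - 2 ^+ j.+3 * e = 0 by rewrite HX subrr.
have E2 : 1 - m%:R * A - 2 ^+ 1 * w = 0 by rewrite Hw subrr.
have P2 : (2 : R) ^+ j.+2 = 2 ^+ j * 4 by rewrite !exprS; ring.
have P3 : (2 : R) ^+ j.+3 = 2 ^+ j * 8 by rewrite !exprS; ring.
have P4 : (2 : R) ^+ j.+4 = 2 ^+ j * 16 by rewrite !exprS; ring.
move: E1 E2; rewrite natrM P2 P3 P4 expr1 => E1 E2.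
apply: subr0_eq.
transitivity ((A - T j.+4 - 2 ^+ j * 8 * e) + 2 ^+ j * 8 * e * (1 - m%:R * A - 2 * w)).
  ring.
by rewrite E1 E2 mulr0 addr0.
Qed.

Lemma hensel_ex : exists s : nat -> R,
  (forall n, cg n (s n.+1) (s n)) /\ (forall n, cg n (s n ^+ (2 * m)) (T n)).
Proof.
exists S; split => n.
  rewrite [S n.+1]/=.
  set e := divc _ _.
  apply: (@cg_le _ n.+2); first by lia.
  apply: (proj2 (cgE _ _ _)).
  have -> : S n - 2 ^+ n.+2 * e * S n - S n = 2 ^+ n.+2 * (- (e * S n)) by ring.
  exact: cg_mul.
apply: cg_trans (_ : cg n (T n.+3) (T n)).
  by apply: (@cg_le _ n.+3); [lia | apply: Sinv].
by have := Tchain n 3; rewrite add3n.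
Qed.
End Hensel.

Section Fin.
Variable c : int.
Local Notation R := (zc c).

Definition m8 (x : R) : R := ZC (re x %% 8)%Z (im x %% 8)%Z.
Definition mulm (x y : R) : R := m8 (x * y).
Definition powm (x : R) (k : nat) : R := iter k (mulm x) 1.
Definition unitp (x : R) : bool := ((Nm x) %% 2)%Z == 1.
Definition V4 : seq R := [seq ZC (Posz a) (Posz b) | a <- iota 0 4, b <- iota 0 4].
Definition U4 : seq R := filter unitp V4.
Definition Rc : seq R := filter unitp [:: ZC 1 0; ZC 1 1; ZC 1 2; ZC 1 3; ZC 0 1; ZC 2 1].
Definition R0 : seq R := 0 :: Rc.

Definition zeqb (x y : R) := (re x == re y) && (im x == im y).
Definition inner (r : R) (P T3 T4 : seq (R * R)) :=
  has (fun z3 => let r3 := r + z3.2 in has (fun z4 => let t := m8 (- (r3 + z4.2)) in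
     has (fun s => zeqb s.2 t) P) T4) T3.
Definition chk (pi : R) (mm d3 d4 : nat) : bool :=
  let P0 := [seq (z, powm z (2 * mm)) | z <- R0] in
  let P := [seq (z, powm z (2 * mm)) | z <- Rc] in
  let p2 := powm pi 2 in
  let p3 := powm pi d3 in
  let p4 := powm pi d4 in
  let U := U4 in
  all (fun z => zeqb z 0 || zeqb (m8 (powm z 8)) 1) R0 &&
  all (fun zs => ((re zs.2 %% 2)%Z == 1) && ((im zs.2 %% 2)%Z == 0)) P &&
  all (fun v => let r := 1 + mulm p2 v in
    all (fun u3 => let a3 := mulm p3 u3 in
      let T3 := [seq (z3.1, mulm a3 z3.2) | z3 <- P0] in
      all (fun u4 => let a4 := mulm p4 u4 in
        let T4 := [seq (z4.1, mulm a4 z4.2) | z4 <- P0] in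
        inner r P T3 T4) U) U) V4.
End Fin.

Definition pzK (K : ramext) : zc (Defs.rad K) :=
  match K with Q2sqrtm1 | Q2sqrtm5 => ZC 1 1 | _ => ZC 0 1 end.


Lemma chk_all K : [&& chk (pzK K) 1 2 3, chk (pzK K) 3 2 3,
  chk (pzK K) 1 3 4 & chk (pzK K) 3 3 4].
Proof. case: K; vm_cast_no_check (erefl true). Qed.

Section Sound.
Variable c : int.
Local Notation R := (zc c).

Lemma m8_cg (x : R) : cg 3 (m8 x) x.
Proof.
apply/cg_int; rewrite /m8 /=.
have e8 : (2 ^+ 3 : int) = 8 by [].
rewrite e8; split; apply/dvdzP.
  by exists (- (re x %/ 8)%Z); rewrite {2}(divz_eq (re x) 8); ring.
by exists (- (im x %/ 8)%Z); rewrite {2}(divz_eq (im x) 8); ring.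
Qed.
Lemma mulm_cg (x y : R) : cg 3 (mulm x y) (x * y).
Proof. exact: m8_cg. Qed.
Lemma powm_cg (x : R) k : cg 3 (powm x k) (x ^+ k).
Proof.
elim: k => [|k IH]; first exact: cg_refl.
rewrite /powm iterS -/(powm x k) exprS.
apply: cg_trans (mulm_cg _ _) _; exact: cgMl.
Qed.
Lemma zeqbP (x y : R) : zeqb x y -> x = y.
Proof. by case/andP=> /eqP h1 /eqP h2; apply: zc_eq. Qed.

Definition red4 (x : R) : R := ZC (re x %% 4)%Z (im x %% 4)%Z.
Lemma red4_cg (x : R) : cg 2 (red4 x) x.
Proof.
apply/cg_int; rewrite /red4 /=.
have e4 : (2 ^+ 2 : int) = 4 by [].
rewrite e4; split; apply/dvdzP.
  by exists (- (re x %/ 4)%Z); rewrite {2}(divz_eq (re x) 4); ring.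
by exists (- (im x %/ 4)%Z); rewrite {2}(divz_eq (im x) 4); ring.
Qed.

Lemma red4_V4 (x : R) : red4 x \in V4 c.
Proof.
rewrite /red4 /V4.
have h : forall a : int, exists n : nat, (a %% 4)%Z = n /\ (n < 4)%N.
  move=> a; exists `|(a %% 4)%Z|%N; split; lia.
have [n [-> hn]] := h (re x); have [n' [-> hn']] := h (im x).
apply/allpairsP; exists (n, n'); split => //; rewrite mem_iota /=; lia.
Qed.

Lemma red4_unit (x : R) : unitp x -> unitp (red4 x).
Proof.
rewrite /unitp => /eqP H; apply/eqP.
have := Nm_cg (red4_cg x); have -> : (2 ^+ 2 : int) = 4 by [].
move: H; move: (Nm x) (Nm (red4 x)) => a b; lia.
Qed.

Lemma pow_red (z : R) m mm : (0 < mm)%N -> (m %% 4)%N = mm ->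
  (zeqb z 0 || zeqb (m8 (powm z 8)) 1) -> cg 3 (z ^+ (2 * m)) (z ^+ (2 * mm)).
Proof.
move=> hmm hm Hz.
have -> : (2 * m = 2 * mm + 8 * (m %/ 4))%N by rewrite {1}(divn_eq m 4) hm; lia.
case/orP: Hz => [/zeqbP -> | /zeqbP H8].
  rewrite !expr0n; have -> : (2 * mm + 8 * (m %/ 4) == 0)%N = false by lia.
  have h2 : (2 * mm == 0)%N = false by lia.
  by rewrite h2; apply: cg_refl.
rewrite exprD exprM.
rewrite -[X in cg _ _ X]mulr1; apply: cgMl.
have h8 : cg 3 (z ^+ 8) 1.
  rewrite -H8; apply: cg_sym; apply: cg_trans (m8_cg _) _; exact: powm_cg.
rewrite exprM; have := cgX (m %/ 4)%N h8; by rewrite expr1n.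
Qed.

Lemma pi_shift (pi e : R) d x y : pi ^+ 2 = 2 * e -> (2 <= d)%N -> cg 2 x y ->
  cg 3 (pi ^+ d * x) (pi ^+ d * y).
Proof.
move=> Hpi hd [w Hw]; exists (e * pi ^+ (d - 2) * w).
rewrite -mulrBr Hw -(subnKC hd) exprD Hpi addKn.
rewrite !exprS expr0; ring.
Qed.

Lemma innerP (r : R) P T3 T4 : inner r P T3 T4 -> exists t3 t4 s,
  [/\ t3 \in T3, t4 \in T4, s \in P & s.2 = m8 (- (r + t3.2 + t4.2))].
Proof.
case/hasP => t3 H3 /hasP [t4 H4 /hasP [s Hs /zeqbP E]].
by exists t3, t4, s.
Qed.

Lemma chk_sound (pi e : R) mm d3 d4 : pi ^+ 2 = 2 * e -> (2 <= d3)%N -> (2 <= d4)%N ->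
  (0 < mm)%N -> chk pi mm d3 d4 -> forall m, (m %% 4)%N = mm ->
  forall rv u3 u4 : R, unitp u3 -> unitp u4 -> exists z3 z4 s0 : R,
  cg 3 (1 + pi ^+ 2 * rv + s0 ^+ (2 * m) + pi ^+ d3 * u3 * z3 ^+ (2 * m)
          + pi ^+ d4 * u4 * z4 ^+ (2 * m)) 0 /\ cg 1 (s0 ^+ (2 * m)) 1.
Proof.
move=> Hpi hd3 hd4 hmm /andP [/andP [Hz HP] Hall] m Hm rv u3 u4 Hu3 Hu4.
have memU : forall u : R, unitp u -> red4 u \in U4 c.
  by move=> u hu; rewrite mem_filter red4_unit // red4_V4.
have H1 := allP Hall _ (red4_V4 rv).
have H2 := allP H1 _ (memU _ Hu3).
have {H1 H2 Hall} := allP H2 _ (memU _ Hu4).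
cbv beta zeta.
case/innerP => t3 [t4 [sp [/mapP [y3 /mapP [z3 Hz3 ->] ->] /mapP [y4 /mapP [z4 Hz4 ->] ->]
   /mapP [s0 Hs0 ->] Heq]]].
exists z3, z4, s0.
set s2 := powm s0 (2 * mm) in Heq.
set s3 := powm z3 (2 * mm) in Heq.
set s4 := powm z4 (2 * mm) in Heq.
set X := 1 + _ + _ + _ in Heq.
have Hs0' : s0 \in R0 c by rewrite inE Hs0 orbT.
have PR : forall z, z \in R0 c -> cg 3 (z ^+ (2 * m)) (powm z (2 * mm)).
  move=> z hz; apply: cg_trans (pow_red hmm Hm (allP Hz _ hz)) _.
  apply: cg_sym; exact: powm_cg.
have HX : cg 3 (s2 + X) 0.
  have -> : s2 + X = (s2 - (- X)) by rewrite opprK.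
  apply: (proj1 (cgE _ _ _)); rewrite /s2 [powm _ _]Heq; exact: m8_cg.
split; last first.
  have := allP HP _ (map_f (fun z => (z, powm z (2 * mm))) Hs0) => /andP [/eqP h1 /eqP h2].
  apply: (@cg_trans _ _ _ s2); first by apply: (@cg_le _ 3) => //; apply: PR.
  apply/cg_int; rewrite /s2 re1 im1 expr1; split; move: h1 h2 => /=; lia.
apply: cg_trans HX.
have -> : 1 + pi ^+ 2 * rv + s0 ^+ (2 * m) + pi ^+ d3 * u3 * z3 ^+ (2 * m) +
  pi ^+ d4 * u4 * z4 ^+ (2 * m) = s0 ^+ (2 * m) + (1 + pi ^+ 2 * rv +
  pi ^+ d3 * u3 * z3 ^+ (2 * m) + pi ^+ d4 * u4 * z4 ^+ (2 * m)) by ring.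
apply: cgD; first exact: PR.
have T : forall (dd : nat) (u z : R), (2 <= dd)%N -> z \in R0 c ->
    cg 3 (pi ^+ dd * u * z ^+ (2 * m)) (mulm (mulm (powm pi dd) (red4 u)) (powm z (2 * mm))).
  move=> dd u z hd hz; apply: cg_sym.
  apply: cg_trans (mulm_cg _ _) _; apply: cgM; last exact: cg_sym (PR _ hz).
  apply: cg_trans (mulm_cg _ _) _; apply: cg_trans (cgMr _ (powm_cg _ _)) _.
  exact: pi_shift Hpi hd (red4_cg u).
apply: cgD; last exact: (T _ _ _ hd4 Hz4).
apply: cgD; last exact: (T _ _ _ hd3 Hz3).
apply: cgD; first exact: cg_refl.
apply: cg_sym; apply: cg_trans (mulm_cg _ _) _.
apply: cg_trans (cgMr _ (powm_cg _ _)) _.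
exact: pi_shift Hpi (leqnn 2) (red4_cg rv).
Qed.
End Sound.

Lemma par (a : int) : exists q r : int, a = 2 * q + r /\ (r = 0 \/ r = 1).
Proof. exists (a %/ 2)%Z, (a %% 2)%Z; lia. Qed.
Lemma odd_mul_l (a b : int) : ((a * b) %% 2)%Z = 1 -> (a %% 2)%Z = 1.
Proof.
have [q [r [-> [->|->]]]] := par a; last by lia.
rewrite addr0 -mulrA; lia.
Qed.
Lemma odd_mul (a b : int) : (a %% 2)%Z = 1 -> (b %% 2)%Z = 1 -> ((a * b) %% 2)%Z = 1.
Proof.
have [q [r [-> [->|->]]]] := par a; first by lia.
have [q' [r' [-> [->|->]]]] := par b; first by lia.
have -> : (2 * q + 1) * (2 * q' + 1) = 2 * (2 * q * q' + q + q') + 1 by ring.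
lia.
Qed.
Lemma odd_exp (a : int) k : (a %% 2)%Z = 1 -> ((a ^+ k) %% 2)%Z = 1.
Proof.
move=> h; elim: k => [|k IH]; first by rewrite expr0.
by rewrite exprS; apply: odd_mul.
Qed.
Lemma no_div2 r (X : int) : (X %% 2)%Z = 1 -> ~ (2 ^+ r.+1 %| 2 ^+ r * X)%Z.
Proof.
move=> hX; rewrite exprSr dvdz_mul2l; last by rewrite expf_neq0.
lia.
Qed.

Definition ev (K : ramext) (n : nat) (u : OK) : zc (Defs.rad K) := ZC (u.1 n) (u.2 n).
Definition ofz c (Y : nat -> zc c) : OK := (fun n => re (Y n), fun n => im (Y n)).
Definition eK K : zc (Defs.rad K) := match K with
  | Q2sqrt2 => ZC 1 0 | Q2sqrtm2 => ZC (-1) 0 | Q2sqrt10 => ZC 5 0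
  | Q2sqrtm10 => ZC (-5) 0 | Q2sqrtm1 => ZC 0 1 | Q2sqrtm5 => ZC (-2) 1 end.
Arguments ev K n u : clear implicits.

Section K.
Variable K : ramext.
Local Notation c := (Defs.rad K).
Local Notation R := (zc c).
Local Notation P := (pzK K).
Local Notation ev := (ev K).
Local Notation eK := (eK K).
Lemma ev_ofz Y n : ev n (ofz Y) = Y n. Proof. rewrite /ev /ofz /=; by case: (Y n). Qed.
Lemma ev_add n u v : ev n (addO u v) = ev n u + ev n v. Proof. by []. Qed.
Lemma ev_mul n u v : ev n (mulO K u v) = ev n u * ev n v. Proof. by []. Qed.
Lemma ev_one n : ev n oneO = 1. Proof. by []. Qed.
Lemma ev_zero n : ev n zeroO = 0. Proof. by []. Qed.
Lemma ev_pi n : ev n (piO K) = P. Proof. by case: K. Qed.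
Lemma ev_exp n u k : ev n (expO K u k) = ev n u ^+ k.
Proof.
elim: k => [|k IH]; first by [].
by rewrite exprS -IH /expO iterS.
Qed.
Lemma ev_piexp n k : ev n (expO K (piO K) k) = P ^+ k.
Proof. by rewrite ev_exp ev_pi. Qed.

Lemma eqO_cg u v : eqO u v <-> forall n, cg n (ev n u) (ev n v).
Proof.
split=> H n.
  by apply/cg_int; have [h1 h2] := H n; split.
by have /cg_int [h1 h2] := H n; split.
Qed.
Lemma coh_cg u : coherent u <-> forall n, cg n (ev n.+1 u) (ev n u).
Proof.
split=> H n.
  by apply/cg_int; have [h1 h2] := H n; split.
by have /cg_int [h1 h2] := H n; split.
Qed.

Lemma pi2 : P ^+ 2 = 2 * eK.
Proof. by case: K; vm_compute. Qed.
Lemma NmPi : exists o : int, Nm P = 2 * o /\ (o %% 2)%Z = 1.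
Proof.
case: K.
- by exists (-1); vm_compute.
- by exists 1; vm_compute.
- by exists (-5); vm_compute.
- by exists 5; vm_compute.
- by exists 1; vm_compute.
- by exists 3; vm_compute.
Qed.

Lemma unit_odd n (x y : R) : (0 < n)%N -> cg n (x * y) 1 -> (Nm x %% 2)%Z = 1.
Proof.
move=> hn /Nm_cg; rewrite NmM.
have -> : Nm (1 : R) = 1 by rewrite /Nm re1 im1; ring.
move=> h; have h2 : (2 %| Nm x * Nm y - 1)%Z.
  apply: dvdz_trans h; rewrite -[X in (X %| _)%Z]expr1; exact: dvdz_exp2l.
apply: (@odd_mul_l _ (Nm y)); move: h2; move: (Nm x * Nm y) => z; lia.
Qed.

Lemma NmPiX r : exists A : int, Nm (P ^+ r) = 2 ^+ r * A /\ forall B : int,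
   (B %% 2)%Z = 1 -> ((A * B) %% 2)%Z = 1.
Proof.
have [o [ho1 ho2]] := NmPi.
exists (o ^+ r); rewrite NmX ho1 exprMn; split => // B hB.
by apply: odd_mul => //; apply: odd_exp.
Qed.

Lemma nontriv t : ~ (forall n, cg n (P ^+ t) 0).
Proof.
move=> H; have := Nm_cg (H t.+1).
have -> : Nm (0 : R) = 0 by rewrite /Nm re0 im0; ring.
have [A [-> hA]] := NmPiX t; rewrite subr0.
apply: no_div2; rewrite -[A]mulr1; apply: hA; by [].
Qed.

Lemma lvl_lt r r' (U U' : R) n : (r < r')%N -> (r' < n)%N ->
  (Nm U %% 2)%Z = 1 -> ~ cg n (P ^+ r * U) (P ^+ r' * U').
Proof.
move=> hr hn hU /Nm_cg; rewrite !NmM.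
have [A [-> hA]] := NmPiX r; have [A' [-> _]] := NmPiX r'.
move=> h.
have h2 : (2 ^+ r.+1 %| 2 ^+ r * (A * Nm U - 2 * (2 ^+ (r' - r.+1) * (A' * Nm U'))))%Z.
  have -> : 2 ^+ r * (A * Nm U - 2 * (2 ^+ (r' - r.+1) * (A' * Nm U'))) =
      2 ^+ r * A * Nm U - 2 ^+ (r + 1 + (r' - r.+1)) * A' * Nm U'.
    rewrite !exprD expr1; ring.
  rewrite addn1 subnKC //.
  apply: (dvdz_trans _ h); apply: dvdz_exp2l; lia.
apply: (no_div2 _ h2); have := hA _ hU.
move: (A * Nm U) (2 ^+ (r' - r.+1) * (A' * Nm U')) => x y; lia.
Qed.
End K.

Lemma expK_eval K (y : OK) k n : (expK K (y, 0%N) k).2 = 0%N /\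
  ev K n (expK K (y, 0%N) k).1 = ev K n y ^+ k.
Proof.
elim: k => [|k [h2 h1]]; first by [].
rewrite /expK iterS -/(expK K (y, 0%N) k) /=; split; first by rewrite h2.
by rewrite exprS -h1.
Qed.

Lemma fv_eval K d s (a : 'I_s -> OK) (y : 'I_s -> OK) n :
  (form_value K d a (fun i => (y i, 0%N))).2 = 0%N /\
  ev K n (form_value K d a (fun i => (y i, 0%N))).1 =
    \sum_(i < s) ev K n (a i) * ev K n (y i) ^+ d.
Proof.
rewrite /form_value; elim: (index_enum _) => [|i l [h2 h1]].
  by rewrite !big_nil.
rewrite !big_cons.
have [e2 e1] := expK_eval K (y i) d n.
rewrite /addK /mulK /=; split; first by rewrite e2 h2.
rewrite ev_add !ev_mul e2 h2 /= e1 h1 !mulr1.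
by [].
Qed.

Lemma expo d N k δ r : (0 < d)%N -> (r <= N)%N -> (r %% d = (k + δ) %% d)%N ->
  (r + d * (N + (k + δ) %/ d - r %/ d) = d * N + k + δ)%N.
Proof.
move=> hd hr hm.
have hq : (r %/ d <= N)%N by apply: leq_trans (leq_div r d) hr.
have e1 := divn_eq r d; have e2 := divn_eq (k + δ)%N d.
move: hq e1 e2 hm; move: (r %/ d)%N ((k + δ) %/ d)%N (r %% d)%N ((k + δ) %% d)%N => q p x y.
nia.
Qed.

Section Z0.
Variable c : int.
Local Notation R := (zc c).
Lemma cgZ k (x a : R) : cg k x 0 -> cg k (a * x) 0.
Proof. by move/(cgMl a); rewrite mulr0. Qed.
Lemma cgD0 k (x y : R) : cg k x 0 -> cg k y 0 -> cg k (x + y) 0.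
Proof. by move=> h1 h2; have := cgD h1 h2; rewrite addr0. Qed.
Lemma cgB0 k (x y : R) : cg k x 0 -> cg k y 0 -> cg k (x - y) 0.
Proof. by move=> h1 h2; have := cgB h1 h2; rewrite subr0. Qed.
Lemma cgE1 k (x y : R) : cg k x y -> cg k (x - y) 0.
Proof. exact: (proj1 (cgE _ _ _)). Qed.
Lemma cgE2 k (x y : R) : cg k (x - y) 0 -> cg k x y.
Proof. exact: (proj2 (cgE _ _ _)). Qed.
End Z0.

Lemma mod4_odd m : odd m -> (m %% 4 = 1)%N \/ (m %% 4 = 3)%N.
Proof.
move=> hm; have h1 : odd (m %% 4) by rewrite odd_mod.
have h2 : (m %% 4 < 4)%N by rewrite ltn_pmod.
move: (m %% 4)%N h1 h2 => x; case: x => [|[|[|[|x]]]] //= _ _; by [left|right].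
Qed.

Lemma sum_if c s (j : 'I_s) (x : zc c) : \sum_(i < s) (if i == j then x else 0) = x.
Proof. by rewrite -big_mkcond big_pred1_eq. Qed.

Lemma le4 (a b c e : nat) : [/\ (a <= a + b + c + e)%N, (b <= a + b + c + e)%N,
  (c <= a + b + c + e)%N & (e <= a + b + c + e)%N].
Proof. split; lia. Qed.

Lemma core (K : ramext) (m s : nat) (a : 'I_s -> OK) (i1 i2 i3 i4 : 'I_s) (b : bool)
  (k δ3 δ4 r1 r2 r3 r4 : nat)
  (U1 U2 U3 U4 W2 W3 W4 V1 V2 : nat -> zc (Defs.rad K)) :
  odd m ->
  (δ3 = 2 /\ δ4 = 3)%N \/ (δ3 = 3 /\ δ4 = 4)%N ->
  i1 != i2 -> i1 != i3 -> i1 != i4 -> i2 != i3 -> i2 != i4 -> i3 != i4 ->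
  (forall n, cg n (ev K n (a i1)) (pzK K ^+ r1 * U1 n)) ->
  (forall n, cg n (ev K n (a i2)) (pzK K ^+ r2 * U2 n)) ->
  (forall n, cg n (ev K n (a i3)) (pzK K ^+ r3 * U3 n)) ->
  (forall n, cg n (ev K n (a i4)) (pzK K ^+ r4 * U4 n)) ->
  (r1 %% (2 * m) = (k + 0) %% (2 * m))%N -> (r2 %% (2 * m) = (k + 0) %% (2 * m))%N ->
  (r3 %% (2 * m) = (k + δ3) %% (2 * m))%N -> (r4 %% (2 * m) = (k + δ4) %% (2 * m))%N ->
  (forall n, cg n (U1 n.+1) (U1 n)) -> (forall n, cg n (U3 n.+1) (U3 n)) ->
  (forall n, cg n (U4 n.+1) (U4 n)) -> (forall n, cg n (W2 n.+1) (W2 n)) ->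
  (forall n, cg n (U2 n * W2 n) 1) -> cg 3 (U3 3 * W3 3) 1 -> cg 3 (U4 3 * W4 3) 1 ->
  cg 3 (U1 3) (1 + (if b then pzK K else 0) + pzK K ^+ 2 * V1 3) ->
  cg 3 (U2 3) (1 + (if b then pzK K else 0) + pzK K ^+ 2 * V2 3) ->
  has_nontrivial_zero K (2 * m) a.
Proof.
move=> Hm Hδ n12 n13 n14 n23 n24 n34 hA1 hA2 hA3 hA4 hr1 hr2 hr3 hr4
  cU1 cU3 cU4 cW2 hW2 hW3 hW4 hV1 hV2.
set P := pzK K.
set d := (2 * m)%N.
have hm0 : (0 < m)%N by move: Hm; case: (m).
have hd : (0 < d)%N by rewrite /d muln_gt0.
have hδ3 : (2 <= δ3)%N by case: Hδ => [[-> _]|[-> _]].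
have hδ4 : (2 <= δ4)%N by case: Hδ => [[_ ->]|[_ ->]].
set mm := (m %% 4)%N.
have hmm : (0 < mm)%N by rewrite /mm; case: (mod4_odd Hm) => ->.
have Hchk : chk P mm δ3 δ4.
  have := chk_all K; rewrite -/P /mm.
  by case: (mod4_odd Hm) => ->; case: Hδ => [[-> ->]|[-> ->]] => /and4P [].
set rv := (V1 3 - V2 3) * W2 3.
set u3' := U3 3 * W2 3.
set u4' := U4 3 * W2 3.
have unit3 : unitp u3'.
  apply/eqP; apply: (@unit_odd K 3 _ (W3 3 * U2 3)) => //.
  have -> : u3' * (W3 3 * U2 3) = (U3 3 * W3 3) * (U2 3 * W2 3) by rewrite /u3'; ring.
  by have := cgM hW3 (hW2 3); rewrite mulr1.
have unit4 : unitp u4'.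
  apply/eqP; apply: (@unit_odd K 3 _ (W4 3 * U2 3)) => //.
  have -> : u4' * (W4 3 * U2 3) = (U4 3 * W4 3) * (U2 3 * W2 3) by rewrite /u4'; ring.
  by have := cgM hW4 (hW2 3); rewrite mulr1.
have [z3 [z4 [s0 [HE Hs1]]]] :=
  chk_sound (pi2 K) hδ3 hδ4 hmm Hchk (erefl mm) rv unit3 unit4.
rewrite -/P -/d in HE Hs1.
pose G n := U1 n + P ^+ δ3 * U3 n * z3 ^+ d + P ^+ δ4 * U4 n * z4 ^+ d.
pose T n := - (G n * W2 n).
have HT : forall n, cg n (T n.+1) (T n).
  move=> n; apply: cgN; apply: cgM => //.
  apply: cgD; first apply: cgD => //.
    by apply: cgMr; apply: cgMl.
  by apply: cgMr; apply: cgMl.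
have e1 : cg 3 (U2 3 * W2 3 - 1) 0 by apply: cgE1.
have e2 : cg 3 (U1 3 - (1 + (if b then P else 0) + P ^+ 2 * V1 3)) 0 by apply: cgE1.
have e3 : cg 3 (U2 3 - (1 + (if b then P else 0) + P ^+ 2 * V2 3)) 0 by apply: cgE1.
have H0 : cg 3 (s0 ^+ d) (T 3).
  apply: cgE2.
  set E := 1 + P ^+ 2 * rv + s0 ^+ d + P ^+ δ3 * u3' * z3 ^+ d + P ^+ δ4 * u4' * z4 ^+ d in HE.
  set f1 := U2 3 * W2 3 - 1 in e1.
  set f2 := U1 3 - _ in e2.
  set f3 := U2 3 - _ in e3.
  have -> : s0 ^+ d - T 3 = W2 3 * (U2 3 * E + f2 - f3 - (P ^+ 2 * (V1 3 - V2 3)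
     + P ^+ δ3 * U3 3 * z3 ^+ d + P ^+ δ4 * U4 3 * z4 ^+ d) * f1) - s0 ^+ d * f1.
    rewrite /T /G /E /f1 /f2 /f3 /rv /u3' /u4'; ring.
  apply: cgB0; last exact: cgZ.
  apply: cgZ; apply: cgB0; last exact: cgZ.
  apply: cgB0 => //; apply: cgD0 => //; exact: cgZ.
have T31 : cg 1 (T 3) 1.
  by apply: cg_trans Hs1; apply: cg_sym; apply: (@cg_le _ 3).
have H1 : forall n, cg 1 (T n.+1) 1.
  move=> n; case: (leqP n.+1 3) => hn.
    have := Tchain HT n.+1 (3 - n.+1); rewrite subnK // => h.
    apply: cg_trans T31; apply: (@cg_le _ n.+1) => //; exact: cg_sym.
  have := Tchain HT 3 (n.+1 - 3); rewrite subnK; last exact: ltnW.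
  by move=> h; apply: cg_trans T31; apply: (@cg_le _ 3).
have [sq [Hsc Hsr]] := hensel_ex Hm HT H1 H0.
have Hfin : forall n, cg n (G n + U2 n * sq n ^+ d) 0.
  move=> n.
  have -> : G n + U2 n * sq n ^+ d = U2 n * (sq n ^+ d - T n) - G n * (U2 n * W2 n - 1).
    rewrite /T; ring.
  apply: cgB0; first by apply: cgZ; apply: cgE1.
  by apply: cgZ; apply: cgE1.
set N := (r1 + r2 + r3 + r4)%N.
set E := (d * N + k)%N.
have [l1 l2 l3 l4] := le4 r1 r2 r3 r4.
set t1 := (N + (k + 0) %/ d - r1 %/ d)%N.
set t2 := (N + (k + 0) %/ d - r2 %/ d)%N.
set t3 := (N + (k + δ3) %/ d - r3 %/ d)%N.
set t4 := (N + (k + δ4) %/ d - r4 %/ d)%N.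
have x1 : P ^+ r1 * (P ^+ t1) ^+ d = P ^+ E.
  by rewrite -exprM -exprD mulnC expo // addn0.
have x2 : P ^+ r2 * (P ^+ t2) ^+ d = P ^+ E.
  by rewrite -exprM -exprD mulnC expo // addn0.
have x3 : P ^+ r3 * (P ^+ t3) ^+ d = P ^+ E * P ^+ δ3.
  by rewrite -exprM -!exprD mulnC expo // addnA.
have x4 : P ^+ r4 * (P ^+ t4) ^+ d = P ^+ E * P ^+ δ4.
  by rewrite -exprM -!exprD mulnC expo // addnA.
pose Yf (i : 'I_s) n : zc (Defs.rad K) :=
  if i == i1 then P ^+ t1 else if i == i2 then P ^+ t2 * sq n
  else if i == i3 then P ^+ t3 * z3 else if i == i4 then P ^+ t4 * z4 else 0.
exists (fun i => (ofz (Yf i), 0%N)); split; [|split].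
- move=> i; apply/(coh_cg K) => n; rewrite /= !ev_ofz /Yf.
  case: (i == i1); first exact: cg_refl.
  case: (i == i2); first exact: cgMl.
  case: (i == i3); first exact: cg_refl.
  case: (i == i4); exact: cg_refl.
- exists i1 => /(eqO_cg K) H; apply: (@nontriv K t1) => n.
  have := H n; rewrite /= !ev_mul ev_ofz ev_zero !ev_one /Yf eqxx mulr1 mul0r.
  by rewrite -/P.
apply/(eqO_cg K) => n; rewrite /= !ev_mul ev_zero mul0r ev_one mulr1.
have [_ ->] := fv_eval K d a (fun i => ofz (Yf i)) n.
under eq_bigr => i _ do rewrite ev_ofz.
set T1 := ev K n (a i1) * (P ^+ t1) ^+ d.
set T2 := ev K n (a i2) * (P ^+ t2 * sq n) ^+ d.
set T3 := ev K n (a i3) * (P ^+ t3 * z3) ^+ d.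
set T4 := ev K n (a i4) * (P ^+ t4 * z4) ^+ d.
have d0 : (d == 0)%N = false by rewrite eqn0Ngt hd.
have -> : \sum_(i < s) ev K n (a i) * Yf i n ^+ d =
   \sum_(i < s) ((if i == i1 then T1 else 0) + (if i == i2 then T2 else 0)
     + (if i == i3 then T3 else 0) + (if i == i4 then T4 else 0)).
  apply: eq_bigr => i _; rewrite /Yf.
  case: (eqVneq i i1) => [->|h1].
    by rewrite (negbTE n12) (negbTE n13) (negbTE n14) !addr0.
  case: (eqVneq i i2) => [->|h2].
    by rewrite (negbTE n23) (negbTE n24) !addr0 add0r.
  case: (eqVneq i i3) => [->|h3].
    by rewrite (negbTE n34) !addr0 !add0r.
  case: (eqVneq i i4) => [->|h4].
    by rewrite !add0r.
  by rewrite expr0n d0 mulr0 !addr0.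
rewrite !big_split /= !sum_if.
apply: (@cg_trans _ _ _ (P ^+ r1 * U1 n * (P ^+ t1) ^+ d + P ^+ r2 * U2 n * (P ^+ t2 * sq n) ^+ d
  + P ^+ r3 * U3 n * (P ^+ t3 * z3) ^+ d + P ^+ r4 * U4 n * (P ^+ t4 * z4) ^+ d)).
  by rewrite /T1 /T2 /T3 /T4; apply: cgD; [apply: cgD; [apply: cgD|]|]; apply: cgMr.
rewrite !exprMn.
have -> : P ^+ r1 * U1 n * (P ^+ t1) ^+ d + P ^+ r2 * U2 n * ((P ^+ t2) ^+ d * sq n ^+ d) +
    P ^+ r3 * U3 n * ((P ^+ t3) ^+ d * z3 ^+ d) + P ^+ r4 * U4 n * ((P ^+ t4) ^+ d * z4 ^+ d)
  = U1 n * (P ^+ r1 * (P ^+ t1) ^+ d) + U2 n * sq n ^+ d * (P ^+ r2 * (P ^+ t2) ^+ d)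
    + U3 n * z3 ^+ d * (P ^+ r3 * (P ^+ t3) ^+ d) + U4 n * z4 ^+ d * (P ^+ r4 * (P ^+ t4) ^+ d).
  ring.
rewrite x1 x2 x3 x4.
have -> : U1 n * P ^+ E + U2 n * sq n ^+ d * P ^+ E + U3 n * z3 ^+ d * (P ^+ E * P ^+ δ3) +
    U4 n * z4 ^+ d * (P ^+ E * P ^+ δ4) = P ^+ E * (G n + U2 n * sq n ^+ d).
  rewrite /G; ring.
exact: cgZ.
Qed.

Lemma lvl_eq K (x U U' W W' : nat -> zc (Defs.rad K)) r r' :
  (forall n, cg n (x n) (pzK K ^+ r * U n)) -> (forall n, cg n (x n) (pzK K ^+ r' * U' n)) ->
  (forall n, cg n (U n * W n) 1) -> (forall n, cg n (U' n * W' n) 1) -> r = r'.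
Proof.
move=> h h' hu hu'.
case: (ltngtP r r') => // hr.
  exfalso. apply: (@lvl_lt K r r' (U r'.+1) (U' r'.+1) r'.+1) => //.
    exact: (@unit_odd K r'.+1 _ (W r'.+1) (ltn0Sn _) (hu _)).
  by apply: cg_trans (h' _); apply: cg_sym.
exfalso. apply: (@lvl_lt K r' r (U' r.+1) (U r.+1) r.+1) => //.
  exact: (@unit_odd K r.+1 _ (W' r.+1) (ltn0Sn _) (hu' _)).
by apply: cg_trans (h _); apply: cg_sym.
Qed.

Lemma neq_lvl d k e e' r : (r %% d = (k + e) %% d)%N -> (r %% d = (k + e') %% d)%N ->
  (e < e')%N -> (e' < d)%N -> False.
Proof.
move=> h h' lt1 lt2.
have : (k + e + 0 == k + e + (e' - e) %[mod d])%N.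
  rewrite addn0 -addnA subnKC; [by rewrite -h -h' | exact: ltnW].
rewrite eqn_modDl mod0n modn_small; last by lia.
by move/eqP; lia.
Qed.

Lemma ev_if K n (b : bool) x y : ev K n (if b then x else y) = if b then ev K n x else ev K n y.
Proof. by case: b. Qed.

Lemma six m : (3 <= m)%N -> (6 <= 2 * m)%N.
Proof. lia. Qed.

Lemma main_aux (K : ramext) (m s : nat) (a : 'I_s -> OK) (k : nat) (i1 i2 i3 i4 : 'I_s)
  (b : bool) (δ3 δ4 : nat) :
  odd m -> (3 <= m)%N -> (δ3 = 2 /\ δ4 = 3)%N \/ (δ3 = 3 /\ δ4 = 4)%N ->
  i1 != i2 -> at_level_coef K (2 * m) (a i1) k b -> at_level_coef K (2 * m) (a i2) k b ->
  at_level K (2 * m) (a i3) (k + δ3) -> at_level K (2 * m) (a i4) (k + δ4) ->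
  has_nontrivial_zero K (2 * m) a.
Proof.
move=> Hm H3 Hδ n12 [r1 [u1 [cu1 [[w1 [cw1 hw1]] [hA1 [hr1 [v1 [cv1 hv1]]]]]]]]
  [r2 [u2 [cu2 [[w2 [cw2 hw2]] [hA2 [hr2 [v2 [cv2 hv2]]]]]]]]
  [r3 [u3 [cu3 [[w3 [cw3 hw3]] [hA3 hr3]]]]] [r4 [u4 [cu4 [[w4 [cw4 hw4]] [hA4 hr4]]]]].
have cvA : forall (i : 'I_s) r u, eqO (a i) (mulO K (expO K (piO K) r) u) ->
    forall n, cg n (ev K n (a i)) (pzK K ^+ r * ev K n u).
  by move=> i r u /(eqO_cg K) h n; have := h n; rewrite ev_mul ev_piexp.
have cvW : forall u w, eqO (mulO K u w) oneO -> forall n, cg n (ev K n u * ev K n w) 1.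
  by move=> u w /(eqO_cg K) h n; have := h n; rewrite ev_mul ev_one.
have cvV : forall u v, eqO u (addO (addO oneO (if b then piO K else zeroO))
     (mulO K (expO K (piO K) 2) v)) ->
    cg 3 (ev K 3 u) (1 + (if b then pzK K else 0) + pzK K ^+ 2 * ev K 3 v).
  move=> u v /(eqO_cg K) h; have := h 3.
  by rewrite !ev_add ev_mul ev_piexp ev_one ev_if ev_pi ev_zero.
have cvC : forall u, coherent u -> forall n, cg n (ev K n.+1 u) (ev K n u).
  by move=> u /(coh_cg K).
have hA1' := cvA _ _ _ hA1; have hA2' := cvA _ _ _ hA2.
have hA3' := cvA _ _ _ hA3; have hA4' := cvA _ _ _ hA4.
have hw1' := cvW _ _ hw1; have hw2' := cvW _ _ hw2.
have hw3' := cvW _ _ hw3; have hw4' := cvW _ _ hw4.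
have hm6 : (6 <= 2 * m)%N by apply: six.
have neq : forall (i j : 'I_s) r r' u u' w w' e e', (e < e')%N -> (e' < 2 * m)%N ->
    (forall n, cg n (ev K n (a i)) (pzK K ^+ r * ev K n u)) ->
    (forall n, cg n (ev K n (a j)) (pzK K ^+ r' * ev K n u')) ->
    (forall n, cg n (ev K n u * ev K n w) 1) -> (forall n, cg n (ev K n u' * ev K n w') 1) ->
    (r %% (2 * m) = (k + e) %% (2 * m))%N -> (r' %% (2 * m) = (k + e') %% (2 * m))%N ->
    i != j.
  move=> i j r r' u u' w w' e e' lt1 lt2 hi hj hu hu' hr hr'.
  apply/eqP => eij; subst j.
  have err := lvl_eq hi hj hu hu'; subst r'.
  exact: (neq_lvl hr hr' lt1 lt2).
have hr1' : (r1 %% (2 * m) = (k + 0) %% (2 * m))%N by rewrite addn0.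
have hr2' : (r2 %% (2 * m) = (k + 0) %% (2 * m))%N by rewrite addn0.
have l3 : (0 < δ3)%N /\ (δ3 < 2 * m)%N.
  by case: Hδ => [[-> _]|[-> _]]; split => //; apply: leq_trans hm6.
have l4 : (0 < δ4)%N /\ (δ4 < 2 * m)%N.
  by case: Hδ => [[_ ->]|[_ ->]]; split => //; apply: leq_trans hm6.
have l34 : (δ3 < δ4)%N by case: Hδ => [[-> ->]|[-> ->]].
have n13 := neq _ _ _ _ _ _ _ _ _ _ l3.1 l3.2 hA1' hA3' hw1' hw3' hr1' hr3.
have n14 := neq _ _ _ _ _ _ _ _ _ _ l4.1 l4.2 hA1' hA4' hw1' hw4' hr1' hr4.
have n23 := neq _ _ _ _ _ _ _ _ _ _ l3.1 l3.2 hA2' hA3' hw2' hw3' hr2' hr3.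
have n24 := neq _ _ _ _ _ _ _ _ _ _ l4.1 l4.2 hA2' hA4' hw2' hw4' hr2' hr4.
have n34 := neq _ _ _ _ _ _ _ _ _ _ l34 l4.2 hA3' hA4' hw3' hw4' hr3 hr4.
apply: (@core K m s a i1 i2 i3 i4 b k δ3 δ4 r1 r2 r3 r4
  (fun n => ev K n u1) (fun n => ev K n u2) (fun n => ev K n u3) (fun n => ev K n u4)
  (fun n => ev K n w2) (fun n => ev K n w3) (fun n => ev K n w4)
  (fun n => ev K n v1) (fun n => ev K n v2)) => //.
- exact: cvC.
- exact: cvC.
- exact: cvC.
- exact: cvC.
- exact: cvV.
- exact: cvV.
Qed.

Local Close Scope ring_scope.
Unset Implicit Arguments.

Theorem lemma15 (K : ramext) (m s : nat) (a : 'I_s -> OK) :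
  odd m -> (3 <= m)%N ->
  (forall i, coherent (a i)) ->
  (forall i, ~ eqO (a i) zeroO) ->
  (exists k : nat,
     (exists (i j : 'I_s) (b : bool),
        i != j /\ at_level_coef K (2 * m) (a i) k b /\ at_level_coef K (2 * m) (a j) k b) /\
     ((exists i j : 'I_s,
         at_level K (2 * m) (a i) (k + 2) /\ at_level K (2 * m) (a j) (k + 3)) \/
      (exists i j : 'I_s,
         at_level K (2 * m) (a i) (k + 3) /\ at_level K (2 * m) (a j) (k + 4)))) ->
  has_nontrivial_zero K (2 * m) a.
Proof.
move=> Hm H3 _ _ [k [[i1 [i2 [b [n12 [L1 L2]]]]] [[i3 [i4 [L3 L4]]]|[i3 [i4 [L3 L4]]]]]].
  exact: (@main_aux K m s a k i1 i2 i3 i4 b 2 3 Hm H3 (or_introl (conj erefl erefl))).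
exact: (@main_aux K m s a k i1 i2 i3 i4 b 3 4 Hm H3 (or_intror (conj erefl erefl))).
Qed.
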